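(* Let $M$ be a tabular MDP with finite $\mathcal S,\mathcal A$, transition model $P$, and reward $r(\cdot;\theta^* )$ with $|r(s,a;\theta^* )|\le R_{\max}$. Let $\gamma^*,\tilde\gamma\in(0,1)$ be two discount factors, and let $Q^*,\tilde Q$ be the fixed points of the soft Bellman update using discount $\gamma^*$ and $\tilde\gamma$ respectively, with policies $\pi^*(a\mid s;\theta^* )\propto\exp(Q^*(s,a;\theta^* ))$ and $\tilde\pi(a\mid s;\theta^* )\propto\exp(\tilde Q(s,a;\theta^* ))$. Then $$\mathbb E_{s\sim w^*}\big[D_{\mathrm{KL}}(\pi^*(\cdot\mid s;\theta^* )\,\|\,\tilde\pi(\cdot\mid s;\theta^* ))\big]\le\frac{2|\mathcal A|R_{\max}}{(1-\tilde\gamma)(1-\gamma^* )}\,|\tilde\gamma-\gamma^*| .$$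
   Context: The soft Bellman update with transition model $P$ and discount $\gamma$ is $Q(s,a;\theta)=r(s,a;\theta)+\gamma\sum_{s'}P(s'\mid s,a)V(s';\theta)$, $V(s;\theta)=\log\sum_{a\in\mathcal A}\exp(Q(s,a;\theta))$. $w^*$ is the discounted stationary state distribution of $\pi^*$ (under the true MDP). *)

(* Defs.v *)
From mathcomp Require Import all_boot all_order all_algebra.
From mathcomp Require Import all_classical all_reals all_analysis.
Set Implicit Arguments. Unset Strict Implicit. Unset Printing Implicit Defensive.
Import Order.TTheory GRing.Theory Num.Theory.
Local Open Scope ring_scope.

Section MDP.
Variables (R : realType) (S A : finType).

(* P s a s' = P(s' | s, a) is a Markov transition kernel *)
Definition transition_kernel (P : S -> A -> S -> R) : Prop :=
  (forall s a s', 0 <= P s a s') /\ (forall s a, \sum_(s' : S) P s a s' = 1).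

Definition state_distribution (mu : S -> R) : Prop :=
  (forall s, 0 <= mu s) /\ \sum_(s : S) mu s = 1.

Definition softV (Q : S -> A -> R) (s : S) : R :=
  ln (\sum_(a : A) expR (Q s a)).

Definition soft_bellman_fixed (P : S -> A -> S -> R) (r : S -> A -> R) (g : R)
    (Q : S -> A -> R) : Prop :=
  forall s a, Q s a = r s a + g * \sum_(s' : S) P s a s' * softV Q s'.

Definition softmax_policy (Q : S -> A -> R) (s : S) (a : A) : R :=
  expR (Q s a) / \sum_(b : A) expR (Q s b).

Definition KL (p q : A -> R) : R :=
  \sum_(a : A) p a * ln (p a / q a).

(* w is the discounted stationary state distribution of policy pi
   (initial distribution mu0, discount g) under kernel P, i.e. the
   (unique) solution of w = (1-g) mu0 + g * P_pi^T w, equivalently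
   w(s) = (1-g) sum_t g^t Pr(s_t = s). *)
Definition discounted_state_dist (P : S -> A -> S -> R) (mu0 : S -> R) (g : R)
    (pi : S -> A -> R) (w : S -> R) : Prop :=
  forall s', w s' = (1 - g) * mu0 s'
                    + g * \sum_(s : S) w s * \sum_(a : A) pi s a * P s a s'.

End MDP.

(* Main.v *)
Require Import Defs.
From mathcomp Require Import all_boot all_order all_algebra.
From mathcomp Require Import all_classical all_reals all_analysis.
From mathcomp Require Import lra ring.
Import Order.TTheory GRing.Theory Num.Theory.
Local Open Scope ring_scope.

Lemma ex_max (R : realType) (I : finType) (i0 : I) (F : I -> R) :
  exists i, forall j, F j <= F i.
Proof.
case: (@arg_maxP _ R I i0 xpredT F isT) => i _ H; exists i => j; exact: H.
Qed.

Lemma ex_min (R : realType) (I : finType) (i0 : I) (F : I -> R) :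
  exists i, forall j, F i <= F j.
Proof.
case: (@arg_minP _ R I i0 xpredT F isT) => i _ H; exists i => j; exact: H.
Qed.

Lemma sumexp_gt0 (R : realType) (A : finType) (a0 : A) (X : A -> R) :
  0 < \sum_a expR (X a).
Proof.
apply: (lt_le_trans (expR_gt0 (X a0))).
rewrite (bigD1 a0) //= lerDl sumr_ge0 // => a _; exact/ltW/expR_gt0.
Qed.

Lemma L_le (R : realType) (A : finType) (a0 : A) (f h : A -> R) (c : R) :
  (forall a, f a <= h a + c) ->
  ln (\sum_a expR (f a)) <= ln (\sum_a expR (h a)) + c.
Proof.
move=> H.
rewrite -[in X in _ <= X](expRK c) -lnM ?posrE ?sumexp_gt0 ?expR_gt0 //.
rewrite ler_ln ?posrE ?sumexp_gt0 ?mulr_gt0 ?sumexp_gt0 ?expR_gt0 //.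
rewrite mulr_suml; apply: ler_sum => a _; rewrite -expRD ler_expR; exact: H.
Qed.

Lemma ker_le (R : realType) (S A : finType) (P : S -> A -> S -> R) (f : S -> R) hi s a :
  transition_kernel P -> (forall s', f s' <= hi) -> \sum_s' P s a s' * f s' <= hi.
Proof.
move=> [P0 P1] H.
apply: (le_trans (y := \sum_s' P s a s' * hi)).
  by apply: ler_sum => s' _; apply: ler_wpM2l.
by rewrite -mulr_suml P1 mul1r.
Qed.

Lemma ker_ge (R : realType) (S A : finType) (P : S -> A -> S -> R) (f : S -> R) lo s a :
  transition_kernel P -> (forall s', lo <= f s') -> lo <= \sum_s' P s a s' * f s'.
Proof.
move=> [P0 P1] H.
apply: (le_trans (y := \sum_s' P s a s' * lo)).
  by rewrite -mulr_suml P1 mul1r.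
by apply: ler_sum => s' _; apply: ler_wpM2l.
Qed.

Lemma softmaxE (R : realType) (S A : finType) (a0 : A) (Q : S -> A -> R) s a :
  softmax_policy Q s a = expR (Q s a - softV Q s).
Proof.
by rewrite /softmax_policy /softV expRB lnK // posrE (@sumexp_gt0 _ _ a0).
Qed.

Lemma softmax_ge0 (R : realType) (S A : finType) (Q : S -> A -> R) s a :
  0 <= softmax_policy Q s a.
Proof.
by rewrite /softmax_policy divr_ge0 // ?sumr_ge0 // => *; apply/ltW/expR_gt0.
Qed.

Lemma softmax_sum1 (R : realType) (S A : finType) (a0 : A) (Q : S -> A -> R) s :
  \sum_a softmax_policy Q s a = 1.
Proof.
rewrite /softmax_policy -mulr_suml divff //.
by apply/lt0r_neq0; apply: (@sumexp_gt0 _ _ a0).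
Qed.
Arguments ex_max {R I}. Arguments ex_min {R I}.
Arguments L_le {R A} a0 {f h c}.
Arguments ker_le {R S A P f hi} s a. Arguments ker_ge {R S A P f lo} s a.
Arguments softmaxE {R S A} a0 {Q s a}.
Arguments softmax_ge0 {R S A}. Arguments softmax_sum1 {R S A} a0 Q s.
Lemma wdist {R : realType} {S A : finType} {P : S -> A -> S -> R} {pol : S -> A -> R}
   {mu0 w : S -> R} {g : R} :
  transition_kernel P -> state_distribution mu0 -> 0 < g < 1 ->
  (forall s a, 0 <= pol s a) -> (forall s, \sum_a pol s a = 1) ->
  discounted_state_dist P mu0 g pol w ->
  (forall s, 0 <= w s) /\ \sum_s w s = 1.
Proof.
move=> [P0 P1] [m0 m1] /andP[g0 g1] pi0 pi1 Hw.
set K := fun s s' => \sum_a pol s a * P s a s'.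
have K0 : forall s s', 0 <= K s s'.
  by move=> s s'; apply: sumr_ge0 => a _; apply: mulr_ge0.
have K1 : forall s, \sum_s' K s s' = 1.
  move=> s; rewrite /K exchange_big /= -(pi1 s); apply: eq_bigr => a _.
  by rewrite -mulr_sumr P1 mulr1.
split; last first.
  have : \sum_s w s = (1 - g) + g * \sum_s w s.
    rewrite {1}(eq_bigr _ (fun s _ => Hw s)) big_split /= -mulr_sumr m1 mulr1.
    congr (_ + _); rewrite -mulr_sumr; congr (_ * _).
    rewrite exchange_big /=; apply: eq_bigr => s _.
    by rewrite -mulr_sumr K1 mulr1.
  set x := \sum_s w s => H.
  have H2 : (1 - g) * x = (1 - g) * 1.
    by rewrite mulr1 mulrBl mul1r {1}H addrK.
  by apply: (mulfI _ H2); apply: lt0r_neq0; rewrite subr_gt0.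
set X := \sum_(s | w s < 0) w s.
have k1 : forall s, \sum_(s' | w s' < 0) K s s' <= 1.
  move=> s; rewrite -(K1 s) big_mkcond /=; apply: ler_sum => s' _.
  by case: ifP.
have k0 : forall s, 0 <= \sum_(s' | w s' < 0) K s s'.
  by move=> s; apply: sumr_ge0.
have HX : g * X <= X.
  apply: (le_trans (y := \sum_(s' | w s' < 0) g * \sum_s w s * K s s')).
    rewrite /X -mulr_sumr; apply: ler_wpM2l; first lra.
    rewrite exchange_big /= big_mkcond /=; apply: ler_sum => s _.
    rewrite -mulr_sumr; case: ifP => Hs.
      rewrite -[X in X <= _]mulr1; apply: ler_wnM2l => //; exact: ltW.
    by rewrite mulr_ge0 // leNgt Hs.
  rewrite /X; apply: ler_sum => s' _; rewrite Hw lerDr mulr_ge0 //; lra.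
have X0 : 0 <= X.
  have : 0 <= (1 - g) * X by rewrite mulrBl mul1r subr_ge0.
  by rewrite pmulr_rge0 // subr_gt0.
move=> s0; rewrite leNgt; apply/negP => Hs0.
have : X <= w s0.
  rewrite /X (bigD1 s0) //= gerDl; apply: sumr_le0 => s /andP[Hs _]; exact: ltW.
lra.
Qed.

Theorem corollary2 (R : realType) (S A : finType)
    (P : S -> A -> S -> R) (r : S -> A -> R) (Rmax : R)
    (gstar gtilde : R) (Qstar Qtilde : S -> A -> R)
    (mu0 w : S -> R) :
  transition_kernel P ->
  (forall s a, `|r s a| <= Rmax) ->
  0 < gstar < 1 -> 0 < gtilde < 1 ->
  soft_bellman_fixed P r gstar Qstar ->
  soft_bellman_fixed P r gtilde Qtilde ->
  state_distribution mu0 ->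
  discounted_state_dist P mu0 gstar (softmax_policy Qstar) w ->
  \sum_(s : S) w s * KL (softmax_policy Qstar s) (softmax_policy Qtilde s)
    <= (2 * #|A|%:R * Rmax) / ((1 - gtilde) * (1 - gstar)) * `|gtilde - gstar|.
Proof.
move=> HP Hr gs gt HbS HbT Hmu Hw.
case: (pickP (@predT S)) => [s0 _|HS]; last first.
  case: Hmu => _ H1.
  have : (0:R) = 1 by rewrite -H1 big1 // => s _; have := HS s.
  by move/eqP; rewrite eq_sym oner_eq0.
case: (pickP (@predT A)) => [a0 _|HA]; last first.
  rewrite big1; last first.
    by move=> s _; rewrite /KL big1 ?mulr0 // => a _; have := HA a.
  rewrite eq_card0; last by move=> a; have := HA a.
  by rewrite mulr0 mul0r !mul0r.
have [w0 w1] := wdist HP Hmu gs (softmax_ge0 Qstar) (softmax_sum1 a0 Qstar) Hw.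
have R0 : 0 <= Rmax := le_trans (normr_ge0 _) (Hr s0 a0).
have rb : forall s a, - Rmax <= r s a <= Rmax by move=> s a; rewrite -ler_norml.
set VS := softV Qstar. set VT := softV Qtilde.
move: gs gt => /andP[gs0 gs1] /andP[gt0 gt1].
have [s1 Hs1] := ex_max s0 VS.
have [s2 Hs2] := ex_min s0 VS.
have sV : (1 - gstar) * (VS s1 - VS s2) <= 2 * Rmax.
  have : VS s1 <= VS s2 + (2 * Rmax + gstar * (VS s1 - VS s2)).
    apply: (L_le a0) => a.
    rewrite (HbS s1 a) (HbS s2 a).
    have := ker_le s1 a HP Hs1; have := ker_ge s2 a HP Hs2.
    move: (rb s1 a) (rb s2 a) => /andP[? ?] /andP[? ?].
    set y1 := \sum_s' _ * _; set y2 := \sum_s' _ * _ => h2 h1.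
    have := ler_wpM2l (ltW gs0) h1; have := ler_wpM2l (ltW gs0) h2.
    rewrite mulrBr; lra.
  rewrite mulrBl mul1r mulrBr; lra.
set D := fun p : S * A => Qstar p.1 p.2 - Qtilde p.1 p.2.
have [pM HpM] := ex_max (s0, a0) D.
have [pm Hpm] := ex_min (s0, a0) D.
have E1 : forall s, VS s <= VT s + D pM.
  move=> s; apply: (L_le a0) => a; have := HpM (s, a); rewrite /D /=; lra.
have E2 : forall s, D pm <= VS s - VT s.
  move=> s; have : VT s <= VS s + - D pm.
    apply: (L_le a0) => a; have := Hpm (s, a); rewrite /D /=; lra.
  lra.
have PE : forall s a, D pm <= \sum_s' P s a s' * VS s' - \sum_s' P s a s' * VT s' <= D pM.
  move=> s a; rewrite -sumrB.
  under eq_bigr do rewrite -mulrBr.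
  apply/andP; split; [apply: ker_ge => // s'; exact: E2|apply: ker_le => // s'; have := E1 s'; lra].
have Dexp : forall p, D p = (gstar - gtilde) * (\sum_s' P p.1 p.2 s' * VS s')
     + gtilde * (\sum_s' P p.1 p.2 s' * VS s' - \sum_s' P p.1 p.2 s' * VT s').
  move=> p; rewrite /D (HbS p.1 p.2) (HbT p.1 p.2) -/VS -/VT.
  rewrite mulrBl mulrBr; lra.
have dD : (1 - gtilde) * (D pM - D pm) <= `|gtilde - gstar| * (VS s1 - VS s2).
  have := Dexp pM; have := Dexp pm.
  have := PE pM.1 pM.2; have := PE pm.1 pm.2.
  set z1 := (\sum_s' P pM.1 pM.2 s' * VS s' - _).
  set z2 := (\sum_s' P pm.1 pm.2 s' * VS s' - _).
  set y1 := \sum_s' P pM.1 pM.2 s' * VS s'.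
  set y2 := \sum_s' P pm.1 pm.2 s' * VS s'.
  have Y1 := ker_le pM.1 pM.2 HP Hs1; have Y2 := ker_ge pM.1 pM.2 HP Hs2.
  have Y3 := ker_le pm.1 pm.2 HP Hs1; have Y4 := ker_ge pm.1 pm.2 HP Hs2.
  rewrite -/y1 -/y2 in Y1 Y2 Y3 Y4.
  have Hy : `|y1 - y2| <= VS s1 - VS s2 by rewrite ler_norml; apply/andP; split; lra.
  have Hg : (gstar - gtilde) * (y1 - y2) <= `|gtilde - gstar| * (VS s1 - VS s2).
    apply: (le_trans (ler_norm _)); rewrite normrM distrC.
    by apply: ler_wpM2l.
  move=> /andP[h1 h2] /andP[h3 h4] e1 e2.
  have : gtilde * z1 - gtilde * z2 <= gtilde * (D pM - D pm).
    rewrite -mulrBr; apply: ler_wpM2l; [exact: ltW| lra].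
  move=> H; lra.
have KLb : forall s, KL (softmax_policy Qstar s) (softmax_policy Qtilde s) <= D pM - D pm.
  move=> s; rewrite /KL.
  apply: (le_trans (y := \sum_a softmax_policy Qstar s a * (D pM - D pm))).
    apply: ler_sum => a _; apply: ler_wpM2l; first exact: softmax_ge0.
    rewrite !(softmaxE a0) -expRB expRK -/VS -/VT.
    have := HpM (s, a); have := E2 s; rewrite /D /=; lra.
  by rewrite -mulr_suml (softmax_sum1 a0) mul1r.
have Bb : D pM - D pm <= (2 * #|A|%:R * Rmax) / ((1 - gtilde) * (1 - gstar)) * `|gtilde - gstar|.
  rewrite mulrAC ler_pdivlMr; last by apply: mulr_gt0; rewrite subr_gt0.
  have n1 : 1 <= #|A|%:R :> R by rewrite ler1n; apply/card_gt0P; exists a0.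
  move: n1 dD sV.
  set d := D pM - D pm; set v := VS s1 - VS s2; set G := `|gtilde - gstar|.
  set n := #|A|%:R => n1 dD sV.
  have dg : 0 <= G by apply: normr_ge0.
  have h0 : 0 <= Rmax * G by apply: mulr_ge0.
  have h1 : 0 <= (n - 1) * (Rmax * G) by apply: mulr_ge0; lra.
  have h2 : (1 - gstar) * ((1 - gtilde) * d) <= (1 - gstar) * (G * v).
    by apply: ler_wpM2l => //; lra.
  have h3 : G * ((1 - gstar) * v) <= G * (2 * Rmax).
    by apply: ler_wpM2l.
  have -> : d * ((1 - gtilde) * (1 - gstar)) = (1 - gstar) * ((1 - gtilde) * d) by ring.
  have e3 : (1 - gstar) * (G * v) = G * ((1 - gstar) * v) by ring.
  have e4 : 2 * n * Rmax * G = 2 * (Rmax * G) + 2 * ((n - 1) * (Rmax * G)) by ring.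
  have e5 : G * (2 * Rmax) = 2 * (Rmax * G) by ring.
  lra.
apply: (le_trans (y := \sum_s w s * ((2 * #|A|%:R * Rmax) / ((1 - gtilde) * (1 - gstar)) * `|gtilde - gstar|))).
  apply: ler_sum => s _; apply: ler_wpM2l => //; exact: le_trans (KLb s) Bb.
by rewrite -mulr_suml w1 mul1r.
Qed.
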